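(* Let $p\in(0,1)$ and let $f\colon(\{0,1\}^n,\mu_p)\to\{0,1\}$ with $\mu_p(f)>0$ and $m=m(f)>1/p^2$. If for some $S\subseteq[n]$ with $|S|\le\frac{1}{4p}$ we have $\frac{\mu_p(f_{S\to0})}{\mu_p(f)}<\frac14$, then $\mu_p(f)<\exp(-0.001\sqrt m)$.
   Context: $\mu_p$ is the $p$-biased product measure on $\{0,1\}^n$, $\mu_p(f)=\mathbb{E}_{\mu_p}f$, and $f_{S\to0}$ is the restriction fixing all coordinates in $S$ to $0$ (its measure is the $\mu_p$-expectation over the remaining coordinates). With $\chi_i(x)=\frac{x_i-p}{\sqrt{p(1-p)}}$, $\hat f(\{i\})=\mathbb{E}_{\mu_p}[f\chi_i]$; $\delta=\max_i|\hat f(\{i\})|$ and $m(f)=|\{i:\hat f(\{i\})^2\ge\delta^2/2\}|$. *)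

(* Defs.v *)
From HB Require Import structures.
From mathcomp Require Import all_boot all_order all_algebra.
From mathcomp Require Import reals sequences.
Set Implicit Arguments. Unset Strict Implicit. Unset Printing Implicit Defensive.
Import Order.TTheory GRing.Theory Num.Theory.
Local Open Scope ring_scope.

(* the discrete cube {0,1}^n ; true = 1, false = 0 *)
Definition cube (n : nat) := {ffun 'I_n -> bool}.

Section Biased.
Variable (R : realType) (p : R) (n : nat).

Definition mu_pt (x : cube n) : R :=
  \prod_(i < n) (if x i then p else 1 - p).

Definition Ep (g : cube n -> R) : R := \sum_(x : cube n) mu_pt x * g x.

Definition mu_p (f : cube n -> bool) : R := Ep (fun x => (f x)%:R).

(* f_{S->0}: coordinates in S fixed to 0; viewed as a function on the whole
   cube that ignores coordinates in S, so its mu_p-measure equals the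
   expectation over the remaining coordinates. *)
Definition restr0 (S : {set 'I_n}) (f : cube n -> bool) : cube n -> bool :=
  fun x => f [ffun i => if i \in S then false else x i].

Definition chi (i : 'I_n) (x : cube n) : R :=
  ((x i)%:R - p) / Num.sqrt (p * (1 - p)).

Definition fhat1 (f : cube n -> bool) (i : 'I_n) : R :=
  Ep (fun x => (f x)%:R * chi i x).

Definition delta (f : cube n -> bool) : R :=
  \big[Num.max/0]_(i < n) `|fhat1 f i|.

Definition mf (f : cube n -> bool) : nat :=
  #|[set i : 'I_n | delta f ^+ 2 / 2 <= fhat1 f i ^+ 2]|.

End Biased.

(* Main.v *)
Require Import Defs.
From HB Require Import structures.
From mathcomp Require Import all_boot all_order all_algebra.
From mathcomp Require Import reals sequences exp.
From mathcomp Require Import ring lra.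
Import Order.TTheory GRing.Theory Num.Theory.
Local Open Scope ring_scope.

Lemma mu_pt_ge0 (R : realType) (p : R) n (x : cube n) :
  0 < p -> p < 1 -> 0 <= mu_pt p x.
Proof. move=> hp0 hp1; apply: prodr_ge0 => i _; case: (x i) => /=; lra. Qed.

Lemma sig_gt0 (R : realType) (p : R) :
  0 < p -> p < 1 -> 0 < Num.sqrt (p * (1 - p)).
Proof. move=> hp0 hp1; rewrite sqrtr_gt0; apply: mulr_gt0; lra. Qed.

Lemma fhatE (R : realType) (p : R) n (f : cube n -> bool) i :
  0 < p -> p < 1 ->
  fhat1 p f i * Num.sqrt (p * (1 - p)) =
  \sum_x mu_pt p x * (f x)%:R * ((x i)%:R - p).
Proof.
move=> hp0 hp1; rewrite /fhat1 /Ep /chi mulr_suml; apply: eq_bigr => x _.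
by rewrite !mulrA divfK // gt_eqF // sig_gt0.
Qed.

Lemma half_le2 (R : realType) : expR (1 / 2 : R) <= 2.
Proof.
have h := expR_ge1Dx (- (1 / 2) : R).
have e : expR (1/2 : R) * expR (- (1/2)) = 1 by rewrite -expRD subrr expR0.
move: h e (expR_gt0 (1/2 : R)).
set a := expR (1/2 : R); set b := expR (- (1/2) : R) => h e ha.
have : a * (b - 1/2) >= 0 by apply: mulr_ge0; lra.
nra.
Qed.

Lemma factor_le (R : realType) (p : R) (s : R) : 0 < p -> p < 1 ->
  (s = 1 \/ s = -1) ->
  p * expR (s * (1 - p) / 2) + (1 - p) * expR (s * (0 - p) / 2) <= expR (p / 2).
Proof.
move=> hp0 hp1; case=> ->.
- have e1 : expR (1 * (1 - p) / 2) = expR (1/2) * expR (- (p/2)).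
    by rewrite -expRD; congr expR; ring.
  have e2 : expR (1 * (0 - p) / 2) = expR (- (p/2)) by congr expR; ring.
  have e3 : expR (p / 2) = expR (- (p/2)) * expR p by rewrite -expRD; congr expR; lra.
  rewrite e1 e2 e3.
  have h1 := half_le2 R; have h2 := expR_ge1Dx p; have h3 := expR_gt0 (- (p/2)).
  have : 0 <= (2 - expR (1/2)) * (p * expR (- (p/2))).
    apply: mulr_ge0; [lra| apply: mulr_ge0; lra].
  have : 0 <= expR (- (p/2)) * (expR p - 1 - p) by apply: mulr_ge0; lra.
  nra.
- have e1 : expR (-1 * (1 - p) / 2) = expR (- (1/2)) * expR (p / 2).
    by rewrite -expRD; congr expR; ring.
  have e2 : expR (-1 * (0 - p) / 2) = expR (p/2) by congr expR; ring.
  rewrite e1 e2.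
  have : expR (- (1/2) : R) <= expR 0 by rewrite ler_expR; lra.
  rewrite expR0.
  move=> h; have h2 := expR_gt0 (p/2).
  have : 0 <= (1 - expR (- (1/2))) * (p * expR (p/2)).
    apply: mulr_ge0; [lra| apply: mulr_ge0; lra].
  nra.
Qed.

Lemma mgf_le (R : realType) (p : R) n (T : {set 'I_n}) (s : 'I_n -> R) :
  0 < p -> p < 1 -> (forall i, s i = 1 \/ s i = -1) ->
  \sum_(x : cube n) mu_pt p x * expR ((\sum_(j in T) s j * ((x j)%:R - p)) / 2)
  <= expR (#|T|%:R * (p / 2)).
Proof.
move=> hp0 hp1 hs.
pose H (i : 'I_n) (b : bool) := (if b then p else 1 - p) *
  (if i \in T then expR (s i * ((b : nat)%:R - p) / 2) else 1).
have step : forall x : cube n,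
    mu_pt p x * expR ((\sum_(j in T) s j * ((x j)%:R - p)) / 2) =
    \prod_i H i (x i).
  move=> x; rewrite mulr_suml expR_sum big_mkcond /mu_pt -big_split /=.
  by apply: eq_bigr => i _; rewrite /H.
rewrite (eq_bigr _ (fun x _ => step x)).
have -> : \sum_(x : cube n) \prod_i H i (x i) = \prod_i \sum_(b : bool) H i b.
  by rewrite bigA_distr_bigA.
rewrite expRM_natl -prodr_const (big_mkcond (fun i => i \in T)) /=.
apply: ler_prod => i _; rewrite big_bool /H /=; case: ifP => iT.
- apply/andP; split; last exact: factor_le.
  have := expR_gt0 (s i * (1 - p) / 2); have := expR_gt0 (s i * (0 - p) / 2).
  nra.
- rewrite !mulr1; apply/andP; split; lra.
Qed.

Lemma restr_ge (R : realType) (p : R) n (f : cube n -> bool) (S : {set 'I_n}) :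
  0 < p -> p < 1 ->
  \sum_(x : cube n | [forall i in S, ~~ x i]) mu_pt p x * (f x)%:R
  <= mu_p p (restr0 S f).
Proof.
move=> hp0 hp1; rewrite /mu_p /Ep /restr0.
rewrite [X in _ <= X](bigID (fun x : cube n => [forall i in S, ~~ x i])) /=.
have -> : \sum_(x : cube n | [forall i in S, ~~ x i])
    mu_pt p x * (f [ffun i => if i \in S then false else x i])%:R =
  \sum_(x : cube n | [forall i in S, ~~ x i]) mu_pt p x * (f x)%:R.
  apply: eq_bigr => x Px; congr (_ * (f _)%:R); apply/ffunP => i; rewrite ffunE.
  case: ifP => // iS; have := forallP Px i; rewrite iS /=; by case: (x i).
rewrite lerDl; apply: sumr_ge0 => x _; apply: mulr_ge0; first exact: mu_pt_ge0.
by case: (f _).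
Qed.

Lemma cover_ge1 n (S : {set 'I_n}) (R : realType) (x : cube n) :
  ~~ [forall i in S, ~~ x i] -> 1 <= \sum_(i in S) ((x i)%:R : R).
Proof.
move/forallPn => [i]; rewrite negb_imply negbK => /andP[iS xi].
rewrite (bigD1 i) //= xi lerDl; apply: sumr_ge0 => j _; by case: (x j).
Qed.
Theorem mainTheorem18 (R : realType) (p : R) (n : nat)
    (f : cube n -> bool) (S : {set 'I_n}) :
  0 < p -> p < 1 ->
  0 < mu_p p f ->
  1 / p ^+ 2 < (mf p f)%:R ->
  (#|S|)%:R <= 1 / (4 * p) ->
  mu_p p (restr0 S f) / mu_p p f < 1 / 4 ->
  mu_p p f < expR (- (1 / 1000) * Num.sqrt ((mf p f)%:R)).
Proof.
move=> hp0 hp1 hM hm hS hr.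
set M := mu_p p f in hM hr *.
set sig := Num.sqrt (p * (1 - p)).
have hsig : 0 < sig by exact: sig_gt0.
set dl := delta p f.
pose w (x : cube n) := mu_pt p x * (f x)%:R.
have w_ge0 : forall x, 0 <= w x.
  move=> x; apply: mulr_ge0; first exact: mu_pt_ge0. by case: (f x).
have hMw : M = \sum_x w x by [].
rewrite ltr_pdivrMr // in hr.
have hA : 3 / 4 * M < \sum_(i in S) \sum_x w x * (x i)%:R.
  have h1 := restr_ge _ _ _ f S hp0 hp1.
  have h2 : \sum_(x : cube n | ~~ [forall i in S, ~~ x i]) w x <=
            \sum_(i in S) \sum_x w x * (x i)%:R.
    apply: (@le_trans _ _ (\sum_(x : cube n | ~~ [forall i in S, ~~ x i])
                             w x * \sum_(i in S) ((x i)%:R : R))).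
      apply: ler_sum => x Px; apply: ler_peMr => //; exact: cover_ge1.
    apply: (@le_trans _ _ (\sum_(x : cube n) w x * \sum_(i in S) ((x i)%:R : R))).
      rewrite [X in _ <= X](bigID (fun x : cube n => ~~ [forall i in S, ~~ x i])) /=.
      rewrite lerDl; apply: sumr_ge0 => x _; apply: mulr_ge0 => //.
      by apply: sumr_ge0 => i _; case: (x i).
    rewrite [X in _ <= X]exchange_big /=; apply: ler_sum => x _; rewrite mulr_sumr.
    by [].
  have hsp : \sum_x w x = \sum_(x : cube n | [forall i in S, ~~ x i]) w x +
      \sum_(x : cube n | ~~ [forall i in S, ~~ x i]) w x by rewrite (bigID (fun x : cube n => [forall i in S, ~~ x i])).
  have h1' : \sum_(x : cube n | [forall i in S, ~~ x i]) w x <= mu_p p (restr0 S f) := h1.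
  move: h1' h2 hsp hr; rewrite -hMw.
  set a := \sum_(x | _) w x; set b := \sum_(x | _) w x.
  set c := \sum_(i in S) _; set d := mu_p _ _; lra.
have hfE : forall i, fhat1 p f i * sig = \sum_x w x * ((x i)%:R - p) :=
  fun i => fhatE _ _ _ f i hp0 hp1.
have hfE2 : forall i, fhat1 p f i * sig = \sum_x w x * (x i)%:R - p * M.
  move=> i; rewrite hfE hMw mulr_sumr -sumrB; apply: eq_bigr => x _; ring.
have h4p : 0 < 4 * p by lra.
rewrite ler_pdivlMr // in hS.
have hB : M / 2 < \sum_(i in S) fhat1 p f i * sig.
  rewrite (eq_bigr _ (fun i _ => hfE2 i)) sumrB sumr_const -mulr_natr.
  have : 0 <= (1 - #|S|%:R * (4 * p)) * M by apply: mulr_ge0; lra.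
  move: hA; set c := \sum_(i in S) _; nra.
have hfd : forall i, fhat1 p f i <= dl.
  move=> i; apply: le_trans (ler_norm _) _; rewrite /dl /delta.
  exact: le_bigmax.
have hC : M / 2 < #|S|%:R * (dl * sig).
  apply: (lt_le_trans hB); apply: le_trans (ler_sum _ (fun i _ => ler_wpM2r (ltW hsig) (hfd i))) _.
  rewrite sumr_const -[X in X <= _]mulr_natr; nra.
have hD : 2 * p * M < dl * sig.
  have hS0 : 0 <= (#|S|%:R : R) by [].
  have ha : 0 < dl * sig.
    rewrite ltNge; apply/negP => ha.
    have : #|S|%:R * (dl * sig) <= 0 by apply: mulr_ge0_le0.
    lra.
  have : 0 <= (1 - #|S|%:R * (4 * p)) * (dl * sig) by apply: mulr_ge0; lra.
  nra.
pose T := [set i : 'I_n | dl ^+ 2 / 2 <= fhat1 p f i ^+ 2].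
have hmT : mf p f = #|T| by [].
rewrite hmT in hm *.
have hdl : 0 < dl.
  rewrite ltNge; apply/negP => h.
  have : dl * sig <= 0 by apply: mulr_le0_ge0 => //; exact: ltW.
  have : 0 < 2 * p * M by apply: mulr_gt0 => //; lra.
  lra.
pose s i : R := if 0 <= fhat1 p f i then 1 else -1.
have hs1 : forall i, s i = 1 \/ s i = -1 by move=> i; rewrite /s; case: ifP; auto.
have hsf : forall i, s i * fhat1 p f i = `|fhat1 p f i|.
  move=> i; rewrite /s; case: ifP => h; first by rewrite mul1r ger0_norm.
  by rewrite ltr0_norm ?mulN1r // ltNge h.
have hT : forall i, i \in T -> 7/10 * dl <= `|fhat1 p f i|.
  move=> i; rewrite inE -(real_normK (num_real (fhat1 p f i))) => h.
  have := normr_ge0 (fhat1 p f i); nra.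
pose L (x : cube n) := \sum_(j in T) s j * ((x j)%:R - p).
have hEL : \sum_x w x * L x = sig * \sum_(j in T) `|fhat1 p f j|.
  rewrite /L; under eq_bigr do rewrite mulr_sumr.
  rewrite exchange_big mulr_sumr /=; apply: eq_bigr => j _.
  transitivity (s j * \sum_x w x * ((x j)%:R - p)).
    by rewrite mulr_sumr; apply: eq_bigr => x _; ring.
  by rewrite -hfE -hsf; ring.
have hp2 : 0 < p ^+ 2 by apply: exprn_gt0.
have hm0 : 0 < (#|T|%:R : R).
  apply: lt_trans hm; apply: divr_gt0 => //; lra.
have hEL2 : 7/5 * p * #|T|%:R * M < \sum_x w x * L x.
  rewrite hEL.
  have hs : #|T|%:R * (7/10 * dl) <= \sum_(j in T) `|fhat1 p f j|.
    apply: le_trans (ler_sum _ (fun i iT => hT i iT)).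
    by rewrite sumr_const mulr_natl.
  have : 0 <= sig * (\sum_(j in T) `|fhat1 p f j| - #|T|%:R * (7/10 * dl)).
    by apply: mulr_ge0; lra.
  have : 0 < #|T|%:R * (dl * sig - 2 * p * M) by apply: mulr_gt0; lra.
  nra.
set EL := \sum_x w x * L x in hEL2.
set c := EL / M.
have htan : expR (c / 2) * M <= \sum_x w x * expR (L x / 2).
  have e : forall x, expR (c / 2) * (w x + w x * L x / 2 - c / 2 * w x)
                     <= w x * expR (L x / 2).
    move=> x; have h := expR_ge1Dx (L x / 2 - c / 2).
    have ee : expR (L x / 2) = expR (c / 2) * expR (L x / 2 - c / 2).
      by rewrite -expRD; congr expR; lra.
    rewrite ee.
    have : 0 <= expR (c / 2) * w x by apply: mulr_ge0 => //; apply: ltW; apply: expR_gt0.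
    nra.
  apply: le_trans (ler_sum _ (fun x _ => e x)); rewrite -mulr_sumr.
  have -> : \sum_x (w x + w x * L x / 2 - c / 2 * w x) = M.
    rewrite sumrB big_split /= -mulr_suml -mulr_sumr -hMw -/EL /c.
    field; exact: lt0r_neq0.
  by [].
have hup : \sum_x w x * expR (L x / 2) <= expR (#|T|%:R * (p / 2)).
  apply: le_trans (mgf_le _ _ _ T s hp0 hp1 hs1); apply: ler_sum => x _.
  rewrite /w; have := mu_pt_ge0 _ _ _ x hp0 hp1.
  have := expR_gt0 (L x / 2); rewrite /L.
  case: (f x); rewrite /= ?mulr1n ?mulr0n; nra.
have hc : 7 / 10 * p * #|T|%:R < c / 2.
  have : 7/5 * p * #|T|%:R < c by rewrite /c ltr_pdivlMr.
  lra.
have hsq : Num.sqrt (#|T|%:R) <= p * #|T|%:R.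
  rewrite ltr_pdivrMr // in hm.
  have h : (#|T|%:R : R) <= (p * #|T|%:R) ^+ 2 by nra.
  apply: le_trans (ler_wsqrtr h) _; rewrite sqrtr_sqr ger0_norm //.
  by apply: mulr_ge0; lra.
have hlt : expR (#|T|%:R * (p / 2)) <
    expR (- (1 / 1000) * Num.sqrt (#|T|%:R)) * expR (c / 2).
  have : 0 < p * #|T|%:R by apply: mulr_gt0.
  by rewrite -expRD ltr_expR; lra.
have := expR_gt0 (c / 2); nra.
Qed.
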